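(* Let $G$ be a finite non-abelian group satisfying condition (Con), let $L$ be the Laplacian matrix of $\mathcal C_G$, and let $r$ be the number of connected components of the induced subgraph of $\mathcal C_G$ on $G\setminus Z(G)$. Then $|Z(G)|$ is an eigenvalue of $L$ with multiplicity at least $r-1$.
   Context: For a finite group $G$, the commuting graph $\mathcal C_G$ is the simple undirected graph with vertex set $G$ in which distinct $u,v\in G$ are adjacent iff $uv=vu$. The Laplacian matrix of a simple graph is $L=D-A$ ($A$ adjacency matrix, $D$ diagonal degree matrix). $Z(G)$ is the center of $G$ and $C(v)=\{w\in G: wv=vw\}$ the centralizer of $v$. Condition (Con): for all $u,v\in G\setminus Z(G)$, either $C(u)=C(v)$ or $C(u)\cap C(v)=Z(G)$. *)

(* Defs.v *)
From mathcomp Require Import all_boot all_order all_algebra all_fingroup all_solvable all_field.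
Set Implicit Arguments.
Unset Strict Implicit.
Unset Printing Implicit Defensive.
Import GRing.Theory Num.Theory.

Local Open Scope group_scope.

(* The finite group G is the whole carrier of gT : finGroupType. *)

Definition comm_adj (gT : finGroupType) (x y : gT) : bool :=
  (x != y) && (x * y == y * x).

Definition comm_deg (gT : finGroupType) (x : gT) : nat :=
  #|[set y : gT | comm_adj x y]|.

Definition Con (gT : finGroupType) : Prop :=
  forall u v : gT, u \notin 'Z([set: gT]) -> v \notin 'Z([set: gT]) ->
    'C[u] = 'C[v] \/ 'C[u] :&: 'C[v] = 'Z([set: gT]).

Definition comm_laplacian (gT : finGroupType) : 'M[algC]_#|gT| :=
  \matrix_(i, j)
    ((if i == j then (comm_deg (enum_val i))%:R else 0)
     - (comm_adj (enum_val i) (enum_val j))%:R)%R.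

Definition noncentral_rel (gT : finGroupType) : rel gT :=
  fun x y => [&& x \notin 'Z([set: gT]), y \notin 'Z([set: gT]) & comm_adj x y].

Definition noncentral_ncomp (gT : finGroupType) : nat :=
  n_comp (@noncentral_rel gT) [pred x : gT | x \notin 'Z([set: gT])].

(* Main.v *)
Require Import Defs.
From mathcomp Require Import all_boot all_order all_algebra all_fingroup all_solvable all_field.
From mathcomp Require Import ring.
Set Implicit Arguments. Unset Strict Implicit. Unset Printing Implicit Defensive.
Import GRing.Theory Num.Theory.

Section LA.
Local Open Scope ring_scope.
Lemma char_poly_sim (F : fieldType) n (f g B : 'M[F]_n) :
  B \in unitmx -> B *m f = g *m B -> char_poly f = char_poly g.
Proof.
move=> uB e.
have E : char_poly_mx g *m map_mx polyC B = map_mx polyC B *m char_poly_mx f.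
  rewrite /char_poly_mx mulmxBl mulmxBr -!map_mxM -e.
  by rewrite mul_scalar_mx mul_mx_scalar.
have H := congr1 determinant E; rewrite !det_mulmx det_map_mx in H.
rewrite [RHS in _ = RHS]mulrC in H.
have nz : (\det B)%:P != 0 by rewrite polyC_eq0 -unitfE -unitmxE.
by apply/esym; apply: (mulIf nz).
Qed.

Lemma char_lblock (F : fieldType) k m (a : F) (C : 'M[F]_(m, k)) D :
  char_poly (block_mx (a%:M : 'M_k) 0 C D) = ('X - a%:P) ^+ k * char_poly D.
Proof.
rewrite /char_poly /char_poly_mx map_block_mx /= map_mx0 scalar_mx_block.
rewrite opp_block_mx add_block_mx oppr0 addr0 add0r det_lblock.
congr (_ * _); rewrite map_scalar_mx /= -raddfB det_scalar //.
Qed.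

Lemma geom_alg (F : fieldType) n (f : 'M[F]_n) (a : F) k (V : 'M[F]_(k, n)) :
  row_free V -> V *m f = a *: V -> ('X - a%:P) ^+ k %| char_poly f.
Proof.
move=> fV Vf.
have kn : (k <= n)%N by rewrite -(eqP fV) rank_leq_col.
have [m e] : exists m, n = (k + m)%N by exists (n - k)%N; rewrite subnKC.
subst n.
have hr : \rank (V^C)%MS = m by rewrite mxrank_compl (eqP fV) addKn.
have : exists W : 'M[F]_(\rank (V^C)%MS, k + m), (W == V^C)%MS.
  by exists (row_base (V^C)%MS); apply/eqmxP; exact: eq_row_base.
rewrite hr => -[W /eqmxP HW].
set B := col_mx V W.
have uB : B \in unitmx.
  rewrite -row_full_unit -sub1mx /B.
  rewrite -(addsmxE V W) (adds_eqmx (eqmx_refl V) HW).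
  by rewrite sub1mx addsmx_compl_full.
set C := W *m f *m invmx B.
have -> : char_poly f = char_poly (block_mx (a%:M : 'M_k) 0 (lsubmx C) (rsubmx C)).
  apply: (char_poly_sim uB).
  rewrite /B mul_col_mx mul_block_col mul0mx addr0 mul_scalar_mx Vf.
  by rewrite -mul_row_col hsubmxK /C mulmxKV.
by rewrite char_lblock dvdp_mulIl.
Qed.

End LA.

Section S.
Variable gT : finGroupType.
Local Notation Z := ('Z([set: gT]))%g.
Local Open Scope group_scope.

Lemma inZP (x : gT) : reflect (forall y, x * y = y * x) (x \in Z).
Proof.
rewrite /center inE in_setT /=; apply: (iffP centP) => H y.
  by apply: H; rewrite in_setT.
by move=> _; apply: H.
Qed.

Definition Kc (x : gT) : {set gT} := [set y | (y \notin Z) && (x * y == y * x)].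

Lemma con_C (HC : Con gT) x y : x \notin Z -> y \notin Z -> x * y = y * x -> 'C[x] = 'C[y].
Proof.
move=> hx hy hxy; case: (HC x y hx hy) => // H; exfalso.
have : y \in 'C[x] :&: 'C[y].
  by rewrite inE cent1id andbT; apply/cent1P; exact: esym.
by rewrite H (negbTE hy).
Qed.

Lemma KcE x y : (y \in Kc x) = (y \notin Z) && (x * y == y * x).
Proof. exact: in_set. Qed.

Lemma KnZ x y : y \in Kc x -> y \notin Z.
Proof. by rewrite KcE => /andP[]. Qed.

Lemma K_self x : x \notin Z -> x \in Kc x.
Proof. by move=> hx; rewrite KcE hx eqxx. Qed.

Lemma K_symE x y : x \notin Z -> y \notin Z -> (y \in Kc x) = (x \in Kc y).
Proof. by move=> hx hy; rewrite !KcE hx hy /= eq_sym. Qed.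

Lemma K_trans (HC : Con gT) x y w : x \notin Z -> y \in Kc x -> w \in Kc y -> w \in Kc x.
Proof.
rewrite !KcE => hx /andP[hy /eqP hxy] /andP[hw /eqP hyw]; rewrite hw /=.
have : w \in 'C[x] by rewrite (con_C HC hx hy hxy); apply/cent1P; exact: esym.
by move/cent1P => h; apply/eqP; exact: esym.
Qed.

Lemma K_eq (HC : Con gT) x y : x \notin Z -> y \in Kc x -> Kc x = Kc y.
Proof.
move=> hx hy; have hy' := KnZ hy.
apply/setP=> w; apply/idP/idP => hw.
  by apply: (K_trans HC hy' _ hw); rewrite -K_symE.
exact: (K_trans HC hx hy hw).
Qed.

Local Notation e := (@noncentral_rel gT).

Lemma e_sym : symmetric e.
Proof.
move=> x y; rewrite /noncentral_rel /comm_adj (eq_sym y x) [y * x == _]eq_sym.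
by case: (x \in Z); case: (y \in Z).
Qed.

Lemma connectK (HC : Con gT) x y : x \notin Z -> connect e x y = (y \in Kc x).
Proof.
move=> hx; apply/idP/idP.
  have cl : closed e (mem (Kc x)).
    move=> u v /and3P[hu hv /andP[_ /eqP huv]].
    have vu : v \in Kc u by rewrite KcE hv huv eqxx.
    rewrite /=; apply/idP/idP => h.
      by rewrite (K_eq HC hx h) (K_eq HC hu vu) K_self.
    by rewrite (K_eq HC hx h) -(K_eq HC hu vu) K_self.
  by move=> c; rewrite -(closed_connect cl c) /= K_self.
move=> hy; case: (eqVneq x y) => [<-|ne]; first exact: connect0.
apply: connect1; rewrite /noncentral_rel /comm_adj hx ne.
by move: hy; rewrite KcE => /andP[-> ->].
Qed.

Lemma roots_eq (HC : Con gT) r s : roots e r -> roots e s -> r \notin Z -> s \in Kc r -> r = s.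
Proof.
move=> /eqP hr /eqP hs hrz hk.
have /(fingraph.rootP (sym_connect_sym e_sym)) : connect e r s by rewrite connectK.
by rewrite hr hs.
Qed.


Local Open Scope ring_scope.

Definition Lf (x y : gT) : algC :=
  (if x == y then (comm_deg x)%:R else 0) - (comm_adj x y)%:R.

Lemma sum_ind (A : {set gT}) (c : algC) : \sum_y (y \in A)%:R * c = #|A|%:R * c.
Proof.
rewrite (bigID (mem A)) /= [X in _ + X]big1 ?addr0; last by move=> y hy; rewrite (negbTE hy) mul0r.
rewrite (eq_bigr (fun _ => c)); last by move=> y ->; rewrite mul1r.
by rewrite sumr_const mulr_natl.
Qed.

Lemma deg_nZ x : x \notin Z -> (comm_deg x)%:R = (#|Kc x| + #|Z|)%:R - 1 :> algC.
Proof.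
move=> hx.
have E1 : [set y | comm_adj x y] = 'C[x] :\ x.
  apply/setP => y; rewrite in_setD1 [y \in [set _ | _]]in_set /comm_adj (eq_sym y x).
  by congr (_ && _); apply/eqP/cent1P => h; exact: esym.
have E2 : #|'C[x]| = (#|Kc x| + #|Z|)%N.
  rewrite -(cardsID Z 'C[x]) addnC; congr (_ + _)%N.
    apply: eq_card => y; rewrite in_setD KcE; congr (_ && _).
    by apply/cent1P/eqP => h; exact: esym.
  have -> : 'C[x] :&: Z = Z.
    by apply/setIidPr; apply/subsetP => y /inZP h; apply/cent1P; exact: h.
  by [].
rewrite /comm_deg E1; have := cardsD1 x 'C[x]; rewrite cent1id E2 => ->.
rewrite natrD /=; ring.
Qed.

Lemma eig (HC : Con gT) (f : gT -> algC) :
  (forall y, y \in Z -> f y = 0) ->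
  (forall x y, x \notin Z -> y \in Kc x -> f y = f x) ->
  \sum_y f y = 0 -> forall x, \sum_y Lf x y * f y = #|Z|%:R * f x.
Proof.
move=> f0 fK fs x.
have -> : \sum_y Lf x y * f y = (comm_deg x)%:R * f x - \sum_y (comm_adj x y)%:R * f y.
  rewrite /Lf; under eq_bigr do rewrite mulrBl. 
  rewrite sumrB; congr (_ - _).
  rewrite (bigD1 x) //= eqxx big1 ?addr0 // => y hy.
  by rewrite eq_sym (negbTE hy) mul0r.
case: (boolP (x \in Z)) => hx.
  rewrite f0 // !mulr0 sub0r; apply/eqP; rewrite oppr_eq0; apply/eqP.
  rewrite (bigD1 x) //= /comm_adj eqxx /= mul0r add0r.
  transitivity (\sum_y f y); last exact: fs.
  rewrite [RHS](bigD1 x) //= f0 // add0r; apply: eq_bigr => y hy.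
  have /inZP cx := hx.
  by rewrite cx eqxx eq_sym hy /= mul1r.
have -> : \sum_y (comm_adj x y)%:R * f y = \sum_y ((y \in Kc x :\ x)%:R * f x).
  apply: eq_bigr => y _; rewrite in_setD1 /comm_adj (eq_sym y x).
  case: (boolP (y \in Z)) => hy.
    by rewrite f0 // KcE hy /= andbF mulr0 mul0r.
  case: (boolP ((x * y)%g == (y * x)%g)) => hc.
    have hk : y \in Kc x by rewrite KcE hy hc.
    by rewrite hk (fK x y hx hk).
  by rewrite KcE (negbTE hc) !andbF mul0r mul0r.
rewrite sum_ind (deg_nZ hx).
have := cardsD1 x (Kc x); rewrite K_self // => ->.
rewrite !natrD /=; ring.
Qed.

Lemma K_class (HC : Con gT) a b t : a \notin Z -> b \in Kc a -> t \notin Z ->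
  (b \in Kc t) = (a \in Kc t).
Proof.
move=> ha hb ht.
by rewrite (K_symE ht (KnZ hb)) -(K_eq HC ha hb) -K_symE.
Qed.

Lemma Lsym a b : Lf a b = Lf b a.
Proof.
rewrite /Lf /comm_adj (eq_sym b a) [((b * a)%g == _)]eq_sym.
by case: eqP => [->|].
Qed.

Lemma bigE (F : gT -> algC) : \sum_(k < #|gT|) F (enum_val k) = \sum_y F y.
Proof. by rewrite -(big_enum_val F). Qed.

Lemma core (HC : Con gT) (S : {set gT}) (r0 : gT) : r0 \notin Z -> roots e r0 ->
  (forall s, s \in S -> [/\ s \notin Z, roots e s & s != r0]) ->
  ('X - (#|Z|%:R)%:P) ^+ #|S| %| char_poly (comm_laplacian gT).
Proof.
move=> r0nZ r0root hS.
set K0 := Kc r0.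
have K0pos : (#|K0|%:R != 0 :> algC).
  by rewrite pnatr_eq0 -lt0n; apply/card_gt0P; exists r0; exact: K_self.
pose w s y : algC := (y \in Kc s)%:R * #|K0|%:R - (y \in K0)%:R * #|Kc s|%:R.
have weig : forall s, s \notin Z -> forall x, \sum_y Lf x y * w s y = #|Z|%:R * w s x.
  move=> s hs; apply: (eig HC).
  - move=> y hy.
    have h1 : (y \in Kc s) = false by apply/negP => /KnZ; rewrite hy.
    have h2 : (y \in K0) = false by apply/negP => /KnZ; rewrite hy.
    by rewrite /w h1 h2 !mul0r subrr.
  - by move=> a b ha hb; rewrite /w (K_class HC ha hb hs) (K_class HC ha hb r0nZ).
  - by rewrite /w sumrB !sum_ind mulrC subrr.
have Leq : forall i j, comm_laplacian gT i j = Lf (enum_val i) (enum_val j).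
  by move=> i j; rewrite mxE /Lf (inj_eq enum_val_inj).
set V := \matrix_(i < #|S|, j < #|gT|) w (enum_val i) (enum_val j).
have VL : V *m comm_laplacian gT = #|Z|%:R *: V.
  apply/matrixP => i j; rewrite !mxE.
  under eq_bigr => k _ do rewrite mxE Leq Lsym mulrC.
  rewrite (bigE (fun y => Lf (enum_val j) y * w (enum_val i) y)) weig //.
  by case: (hS _ (enum_valP i)).
have fV : row_free V.
  apply/row_freeP.
  exists (\matrix_(j < #|gT|, i < #|S|) ((enum_val j == enum_val i)%:R / #|K0|%:R)).
  apply/matrixP => i i'; rewrite !mxE.
  under eq_bigr => k _ do rewrite !mxE.
  rewrite (bigE (fun y => w (enum_val i) y * ((y == enum_val i')%:R / #|K0|%:R))).
  rewrite (bigD1 (enum_val i')) //= eqxx big1 ?addr0; last first.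
    by move=> y /negbTE ->; rewrite mul0r mulr0.
  case: (hS _ (enum_valP i)) => hi1 hi2 hi3.
  case: (hS _ (enum_valP i')) => hj1 hj2 hj3.
  have h0 : (enum_val i' \in K0) = false.
    apply/negP => h; move: (roots_eq HC r0root hj2 r0nZ h) => h'.
    by rewrite h' eqxx in hj3.
  have h1 : (enum_val i' \in Kc (enum_val i)) = (i == i').
    apply/idP/eqP => [h|<-]; last exact: K_self.
    exact/enum_val_inj/(roots_eq HC hi2 hj2 hi1 h).
  by rewrite /w h0 h1 mul0r subr0 mul1r mulfK.
exact: geom_alg fV VL.
Qed.

End S.

Theorem proposition2p8 (gT : finGroupType) :
  ~~ abelian [set: gT]%g -> Con gT ->
  eigenvalue (comm_laplacian gT) (#|('Z([set: gT]))%g|%:R)%R /\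
  (noncentral_ncomp gT - 1 <= mup (#|('Z([set: gT]))%g|%:R)%R
                                  (char_poly (comm_laplacian gT)))%N.
Proof.
move=> nab HC.
set Z := 'Z([set: gT])%g.
set e := @noncentral_rel gT.
set R := [set x : gT | roots e x && (x \notin Z)].
have hr : noncentral_ncomp gT = #|R|.
  by rewrite /noncentral_ncomp /n_comp_mem; apply: eq_card => x; rewrite !inE.
have [x [y nxy]] : exists x y : gT, (x * y)%g != (y * x)%g.
  case: (pickP [pred p : gT * gT | (p.1 * p.2)%g != (p.2 * p.1)%g]) => [[a b] h|h].
    by exists a, b.
  exfalso; move/negP: nab; apply; rewrite abelianE; apply/centsP => a _ b _.
  by move: (h (a, b)) => /= /negbFE /eqP.
have xnZ : x \notin Z by apply/negP => /inZP h; rewrite h eqxx in nxy.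
have ynZ : y \notin Z by apply/negP => /inZP h; rewrite (h x) eqxx in nxy.
have cs := sym_connect_sym (@e_sym gT).
set r0 := fingraph.root e x.
set r1 := fingraph.root e y.
have r0K : r0 \in Kc x by rewrite -connectK // connect_root.
have r1K : r1 \in Kc y by rewrite -connectK // connect_root.
have r0nZ := KnZ r0K.
have r0R : r0 \in R by rewrite inE (roots_root cs) r0nZ.
have r1R : r1 \in R by rewrite inE (roots_root cs) (KnZ r1K).
have r01 : r1 != r0.
  apply/negP => /eqP h.
  have : connect e x y by apply/(fingraph.rootP cs).
  by rewrite connectK // KcE (negbTE nxy) andbF.
set S := R :\ r0.
have hS : #|R| = (#|S|).+1 by rewrite (cardsD1 r0 R) r0R.
have S1 : (0 < #|S|)%N by apply/card_gt0P; exists r1; rewrite in_setD1 r01 r1R.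
have hd := @core gT HC S r0 r0nZ (roots_root cs x).
have hd' : forall s, s \in S -> [/\ s \notin Z, roots e s & s != r0].
  by move=> s; rewrite in_setD1 inE => /andP[ne /andP[rs nz]]; split.
have cp0 : char_poly (comm_laplacian gT) != 0%R := monic_neq0 (char_poly_monic _).
have hm : (#|S| <= mup (#|Z|%:R)%R (char_poly (comm_laplacian gT)))%N.
  by rewrite mup_geq //; exact: hd hd'.
split; last by rewrite hr hS subn1.
rewrite eigenvalue_root_char -dvdp_XsubCl XsubC_dvd //.
exact: leq_trans S1 hm.
Qed.
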